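(* Let $\lambda\subset n\times n$ be a Young diagram with at least as many boxes above the main diagonal as below. Let $\lambda^c=\nu_1+\cdots+\nu_k$ be the hook decomposition of its complement, and for each $i$ let $\lambda_i$ be the complement in the $n\times n$ square of $\nu_i$ placed right-justified in the bottom right corner. Then for every face label $\mu$ of $G^{\text{co-rect}}_n$, i.e. every $\mu=(n^a,b^{n-a})$ with $0\le a,b\le n$, \[\mathrm{maxdiag}(\mu\setminus\lambda)=\sum_{i=1}^k\mathrm{maxdiag}(\mu\setminus\lambda_i).\]
   Context: Young diagrams are drawn in English notation inside the $n\times n$ square, top-left justified. The face labels of the co-rectangles plabic graph are the diagrams $(n^a,b^{n-a})$, $0\le a,b\le n$ (the diagrams whose complement in the square is a rectangle in the bottom right corner). Hook decomposition: the complement $\lambda^c$ of $\lambda$ in the square, rotated by $180^\circ$, is a Young diagram; $\lambda^c=\nu_1+\cdots+\nu_k$ is its decomposition into the hooks $\nu_i=(a_i,1^{b_i})$ with corners at its successive diagonal boxes (so $a_1>a_2>\cdots$, $b_1>b_2>\cdots$). Placing a hook $(a,1^b)$ right-justified in the bottom right corner means occupying the last $a$ boxes of the bottom row and the last $b+1$ boxes of the rightmost column. For a set $\nu$ of boxes of the square (e.g. the set difference $\mu\setminus\lambda$), $\mathrm{maxdiag}(\nu)$ is the maximum number of boxes of $\nu$ on a single diagonal of slope $-1$. *)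

(* Defs.v *)
From mathcomp Require Import all_boot all_order.
Set Implicit Arguments. Unset Strict Implicit. Unset Printing Implicit Defensive.

(* Boxes of the n x n square: (row, column), 0-indexed, English notation
   (row 0 is the top row, column 0 the leftmost column). *)
Definition box (n : nat) := ('I_n * 'I_n)%type.

(* A Young diagram inside the n x n square, given by its row lengths
   lam = [:: lam_0; ...; lam_{n-1}] (weakly decreasing, each <= n). *)
Definition is_young (n : nat) (lam : seq nat) : bool :=
  [&& size lam == n, sorted geq lam & all (fun x => x <= n) lam].

Definition boxes (n : nat) (lam : seq nat) : {set box n} :=
  [set p : box n | p.2 < nth 0 lam p.1].

Definition n_above n (S : {set box n}) : nat := #|[set p in S | p.1 < p.2]|.
Definition n_below n (S : {set box n}) : nat := #|[set p in S | p.2 < p.1]|.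

Definition rot180 n (p : box n) : box n := (rev_ord p.1, rev_ord p.2).

Definition rot_compl n (lam : seq nat) : {set box n} :=
  [set p : box n | rot180 p \notin boxes n lam].

(* Hook of a diagram S with corner at the diagonal box (d,d):
   a = number of boxes of S in row d at columns >= d,
   b = number of boxes of S in column d at rows > d;
   the hook is (a, 1^b). *)
Definition hook_a n (S : {set box n}) (d : 'I_n) : nat :=
  #|[set p in S | (p.1 == d) && (d <= p.2)]|.
Definition hook_b n (S : {set box n}) (d : 'I_n) : nat :=
  #|[set p in S | (p.2 == d) && (d < p.1)]|.

(* Hook decomposition lam^c = nu_1 + ... + nu_k: the list of hooks (a_i, b_i)
   with corners at the successive diagonal boxes of the rotated complement. *)
Definition hook_decomp n (lam : seq nat) : seq (nat * nat) :=
  [seq (hook_a (rot_compl n lam) d, hook_b (rot_compl n lam) d)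
  | d <- enum 'I_n & (d, d) \in rot_compl n lam].

(* The hook (a, 1^b) placed right-justified in the bottom right corner:
   the last a boxes of the bottom row and the last b+1 boxes of the
   rightmost column. *)
Definition placed_hook n (a b : nat) : {set box n} :=
  [set p : box n | ((p.1 == n.-1 :> nat) && (n - a <= p.2))
                || ((p.2 == n.-1 :> nat) && (n - b.+1 <= p.1))].

Definition hook_compl n (a b : nat) : {set box n} := ~: placed_hook n a b.

(* The face label mu = (n^a, b^(n-a)) of the co-rectangles plabic graph. *)
Definition corect n (a b : nat) : {set box n} :=
  [set p : box n | (p.1 < a) || (p.2 < b)].

(* maxdiag: maximum number of boxes of S on a single diagonal of slope -1,
   i.e. a set {(i,j) : j - i = const}; we index diagonals by
   d = i + n - j (ranging over 1 .. 2n-1). *)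
Definition maxdiag n (S : {set box n}) : nat :=
  \max_(d < (2 * n)) #|[set p in S | p.1 + n == p.2 + d]|.

(* Main.v *)
Require Import Defs.
From mathcomp Require Import all_boot all_order zify.

Definition Lf (lam : seq nat) i := nth 0 lam i.
Definition Xs n lam b : {set 'I_n} :=
  [set e : 'I_n | (n - b <= e) && (Lf lam e <= e - (n - b))].
Definition Ys n lam a : {set 'I_n} :=
  [set e : 'I_n | (n - a <= e) && (Lf lam (e - (n - a)) <= e)].

Lemma Lmono n lam : is_young n lam ->
  forall i j, i <= j -> j < n -> Lf lam j <= Lf lam i.
Proof.
case/and3P => /eqP sz srt _ i j ij jn.
have gt : transitive geq by move=> x y z /= h1 h2; exact: leq_trans h2 h1.
apply: (sorted_leq_nth gt (fun x => leqnn x) 0 srt) => //; rewrite inE sz //.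
exact: leq_ltn_trans ij jn.
Qed.

Lemma inS n lam a b (x : box n) :
  (x \in corect n a b :\: boxes n lam) =
  ((x.1 < a) || (x.2 < b)) && (Lf lam x.1 <= x.2).
Proof. by rewrite !inE -leqNgt andbC. Qed.

Lemma card_inj (T T' : finType) (A : {set T}) (B : {set T'}) (f : T -> T') :
  {in A &, injective f} -> (forall x, x \in A -> f x \in B) -> #|A| <= #|B|.
Proof.
move=> inj sub; rewrite -(card_in_imset inj); apply: subset_leq_card.
by apply/subsetP => y /imsetP [x xA ->]; exact: sub.
Qed.

Lemma LHS_ub n lam a b : is_young n lam -> a <= n -> b <= n ->
  maxdiag (corect n a b :\: boxes n lam) <= maxn #|Xs n lam b| #|Ys n lam a|.
Proof.
move=> Y an bn; case: n Y an bn => [|m] Y an bn; first by rewrite /maxdiag big_ord0.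
have Lm := @Lmono _ _ Y.
apply/bigmax_leqP => D _.
set A := [set p in _ | _].
have memA : forall x : box m.+1, x \in A ->
   [/\ (x.1 < a) || (x.2 < b), Lf lam x.1 <= x.2 & x.1 + m.+1 = x.2 + D].
  by move=> x; rewrite inE inS => /andP [/andP [h1 h2] /eqP h3].
have injA1 : {in A &, forall x y : box m.+1, x.1 = y.1 :> nat -> x = y}.
  move=> [i1 j1] [i2 j2] /memA [_ _ e1] /memA [_ _ e2] h; simpl in *.
  have h' : j1 = j2 :> nat by lia.
  by rewrite (ord_inj h) (ord_inj h').
have injA2 : {in A &, forall x y : box m.+1, x.2 = y.2 :> nat -> x = y}.
  move=> [i1 j1] [i2 j2] /memA [_ _ e1] /memA [_ _ e2] h; simpl in *.
  have h' : i1 = i2 :> nat by lia.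
  by rewrite (ord_inj h) (ord_inj h').
case: (leqP (m.+1 + (m.+1 - b)) D) => [c1|c1].
  apply: leq_trans (leq_maxl _ _).
  apply: (@card_inj _ _ _ _ (fun x : box m.+1 => x.1)).
    by move=> x y xA yA /= h; apply: injA1 => //; rewrite h.
  move=> [i j] /memA /= [_ h2 h3]; rewrite inE.
  apply/andP; split; first by lia.
  apply: leq_trans h2 _; lia.
case: (leqP (D + (m.+1 - a)) m.+1) => [c2|c2].
  apply: leq_trans (leq_maxr _ _).
  apply: (@card_inj _ _ _ _ (fun x : box m.+1 => x.2)).
    by move=> x y xA yA /= h; apply: injA2 => //; rewrite h.
  move=> [i j] /memA /= [_ h2 h3]; rewrite inE.
  apply/andP; split; first by lia.
  apply: leq_trans h2; apply: Lm; first by lia.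
  have := ltn_ord j; lia.
case: (leqP (b + D) (a + m.+1)) => [c3|c3].
  apply: leq_trans (leq_maxr _ _).
  apply: (@card_inj _ _ _ _ (fun x : box m.+1 => inord (x.1 + (m.+1 - a)))).
    move=> [i1 j1] [i2 j2] xA yA /= h; apply: injA1 => //=.
    move: (memA _ xA) (memA _ yA) => /= [h1 _ e1] [h1' _ e1'].
    have lx : i1 + (m.+1 - a) < m.+1 by case/orP: h1; lia.
    have ly : i2 + (m.+1 - a) < m.+1 by case/orP: h1'; lia.
    move/(congr1 (@nat_of_ord _)): h; rewrite !inordK //; lia.
  move=> [i j] /memA /= [h1 h2 h3]; rewrite inE.
  have lx : i + (m.+1 - a) < m.+1 by case/orP: h1; lia.
  rewrite inordK //.
  apply/andP; split; first by lia.
  have -> : i + (m.+1 - a) - (m.+1 - a) = i by lia.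
  lia.
apply: leq_trans (leq_maxl _ _).
apply: (@card_inj _ _ _ _ (fun x : box m.+1 => inord (x.2 + (m.+1 - b)))).
  move=> [i1 j1] [i2 j2] xA yA /= h; apply: injA2 => //=.
  move: (memA _ xA) (memA _ yA) => /= [h1 _ e1] [h1' _ e1'].
  have lx : j1 + (m.+1 - b) < m.+1 by case/orP: h1; lia.
  have ly : j2 + (m.+1 - b) < m.+1 by case/orP: h1'; lia.
  move/(congr1 (@nat_of_ord _)): h; rewrite !inordK //; lia.
move=> [i j] /memA /= [h1 h2 h3]; rewrite inE.
have lx : j + (m.+1 - b) < m.+1 by case/orP: h1; lia.
rewrite inordK //.
apply/andP; split; first by lia.
have -> : j + (m.+1 - b) - (m.+1 - b) = j by lia.
apply: leq_trans h2; apply: Lm => //; lia.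
Qed.

Lemma LHS_lb n lam a b : is_young n lam -> a <= n -> b <= n ->
  maxn #|Xs n lam b| #|Ys n lam a| <= maxdiag (corect n a b :\: boxes n lam).
Proof.
move=> Y an bn; case: n Y an bn => [|m] Y an bn.
  by rewrite geq_max; apply/andP; split; apply: leq_trans (max_card _) _; rewrite card_ord.
have Lm := @Lmono _ _ Y.
rewrite geq_max; apply/andP; split.
  case: (posnP b) => [b0|bp].
    suff -> : Xs m.+1 lam b = set0 by rewrite cards0.
    apply/setP => e; rewrite !inE b0.
    by case: (leqP (m.+1 - 0) e) => //= h; have := ltn_ord e; lia.
  have D0lt : m.+1 + (m.+1 - b) < 2 * m.+1 by lia.
  apply: leq_trans (leq_bigmax (Ordinal D0lt)).
  apply: (@card_inj _ _ _ _ (fun e : 'I_m.+1 => (e, inord (e - (m.+1 - b))))).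
    by move=> x y _ _ [] => // ->.
  move=> e; rewrite !inE /= => /andP [h1 h2].
  have lt : e - (m.+1 - b) < m.+1 by have := ltn_ord e; lia.
  rewrite inordK //; apply/andP; split.
    rewrite -leqNgt; apply/andP; split => //; apply/orP; right; have := ltn_ord e; lia.
  apply/eqP; lia.
have D0lt : a < 2 * m.+1 by lia.
apply: leq_trans (leq_bigmax (Ordinal D0lt)).
apply: (@card_inj _ _ _ _ (fun e : 'I_m.+1 => (inord (e - (m.+1 - a)), e))).
  by move=> x y _ _ [] => // ->.
move=> e; rewrite !inE /= => /andP [h1 h2].
have lt : e - (m.+1 - a) < m.+1 by have := ltn_ord e; lia.
rewrite inordK //; apply/andP; split.
  rewrite -leqNgt; apply/andP; split => //; apply/orP; left; have := ltn_ord e; lia.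
apply/eqP; lia.
Qed.

Lemma card_ordP n (Q : pred nat) : #|[set i : 'I_n | Q i]| = count Q (iota 0 n).
Proof.
rewrite -sum1dep_card -(big_mkord Q (fun _ => 1)) sum1_count.
by rewrite /index_iota subn0.
Qed.

Lemma count_int n lo hi :
  count (fun j => lo <= j < hi) (iota 0 n) = minn hi n - lo.
Proof.
elim: n => [|n IH]; first by rewrite /= minn0.
rewrite -addn1 iotaD count_cat IH /= add0n addn0.
case: (leqP lo n) => h1; case: (ltnP n hi) => h2 /=; lia.
Qed.

Lemma count_thr n lo (Q : pred nat) k : lo < n ->
  (forall i j, lo < i -> i <= j -> j < n -> Q j -> Q i) ->
  (k <= count (fun i => (lo < i < n) && Q i) (iota 0 n)) =
  (k == 0) || ((lo + k < n) && Q (lo + k)).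
Proof.
move=> lon dc.
case: (posnP k) => [->|kp]; first by [].
rewrite orFb.
apply/idP/idP.
  move=> h; apply/negPn/negP => hn.
  have : count (fun i => (lo < i < n) && Q i) (iota 0 n) <=
         count (fun j => lo.+1 <= j < minn n (lo + k)) (iota 0 n).
    apply: sub_count => i /andP [/andP [h1 h2] h3].
    apply/andP; split => //.
    case: (ltnP i (lo + k)) => h4; first by lia.
    exfalso; move/negP: hn; apply; apply/andP; split; first by lia.
    by apply: (dc _ i) => //; lia.
  rewrite count_int; lia.
move=> /andP [h1 h2].
apply: leq_trans (_ : count (fun j => lo.+1 <= j < (lo + k).+1) (iota 0 n) <= _).
  rewrite count_int; lia.
apply: sub_count => i /andP [h3 h4]; apply/andP; split; first by lia.
by apply: (dc _ (lo + k)) => //; lia.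
Qed.

Lemma memR n lam (i j : 'I_n) :
  ((i, j) \in rot_compl n lam) = (Lf lam (n - i.+1) <= n - j.+1).
Proof. by rewrite !inE /= -leqNgt. Qed.

Lemma ha_val n lam (d : 'I_n) :
  hook_a (rot_compl n lam) d =
  count (fun j => (d <= j) && (Lf lam (n - d.+1) <= n - j.+1)) (iota 0 n).
Proof.
rewrite /hook_a -card_ordP.
transitivity #|(fun j : 'I_n => (d, j)) @:
   [set i : 'I_n | (d <= i) && (Lf lam (n - d.+1) <= n - i.+1)]|; last first.
  by apply: card_imset => x y [].
apply: eq_card => -[i j]; rewrite !inE /= -leqNgt /Lf.
apply/andP/imsetP => [[h1 /andP [/eqP e h2]]|[k]].
  by subst i; exists j => //; rewrite inE h1 h2.
by rewrite inE => /andP [h1 h2] [-> ->] /=; rewrite eqxx h1 h2.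
Qed.

Lemma hb_val n lam (d : 'I_n) :
  hook_b (rot_compl n lam) d =
  count (fun i => (d < i < n) && (Lf lam (n - i.+1) <= n - d.+1)) (iota 0 n).
Proof.
rewrite /hook_b -card_ordP.
transitivity #|(fun j : 'I_n => (j, d)) @:
   [set i : 'I_n | (d < i < n) && (Lf lam (n - i.+1) <= n - d.+1)]|; last first.
  by apply: card_imset => x y [].
apply: eq_card => -[i j]; rewrite !inE /= -leqNgt /Lf.
apply/andP/imsetP => [[h1 /andP [/eqP e h2]]|[k]].
  by subst j; exists i => //; rewrite inE h1 h2 ltn_ord.
by rewrite inE => /andP [/andP [h1 _] h2] [-> ->] /=; rewrite eqxx h1 h2.
Qed.

Lemma md_hook n a b ha hb : 0 < n -> a <= n -> b <= n ->
  maxdiag (corect n a b :\: hook_compl n ha hb) =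
  [|| a == n, b == n, n - ha < b | n - hb.+1 < a].
Proof.
case: n => [//|m] _ an bn.
set S := corect _ a b :\: _.
have memS : forall x : box m.+1, (x \in S) = ((x.1 < a) || (x.2 < b)) &&
   (((x.1 == m :> nat) && (m.+1 - ha <= x.2)) ||
    ((x.2 == m :> nat) && (m.+1 - hb.+1 <= x.1))).
  by move=> x; rewrite !inE negbK andbC.
clearbody S.
have le1 : maxdiag S <= 1.
  apply/bigmax_leqP => D _; apply/card_le1_eqP => -[i1 j1] [i2 j2].
  rewrite !inE !memS /= => /andP [/andP [_ h1] /eqP e1] /andP [/andP [_ h2] /eqP e2].
  have l1 := ltn_ord i1; have l2 := ltn_ord i2.
  have l3 := ltn_ord j1; have l4 := ltn_ord j2.
  have [ei ej] : i2 = i1 :> nat /\ j2 = j1 :> nat.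
    by case/orP: h1 => /andP [/eqP h1 _]; case/orP: h2 => /andP [/eqP h2 _]; lia.
  by rewrite (ord_inj ei) (ord_inj ej).
case hc : [|| a == m.+1, b == m.+1, m.+1 - ha < b | m.+1 - hb.+1 < a].
  apply/eqP; rewrite eqn_leq le1 /=.
  have [x xS] : exists x, x \in S.
    case/or4P: hc => [/eqP ea|/eqP eb|h|h].
    - by exists (ord_max, ord_max); rewrite memS /= ea ltnSn eqxx /=; apply/orP; right; lia.
    - by exists (ord_max, ord_max); rewrite memS /= eb ltnSn orbT eqxx /=; apply/orP; right; lia.
    - have hl : m.+1 - ha < m.+1 by lia.
      exists (ord_max, inord (m.+1 - ha)); rewrite memS /= inordK // h orbT eqxx /=.
      by rewrite leqnn.
    - have hl : m.+1 - hb.+1 < m.+1 by lia.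
      exists (inord (m.+1 - hb.+1), ord_max); rewrite memS /= inordK // h eqxx /=.
      by rewrite leqnn orbT.
  case: x xS => i j xS.
  have lx := ltn_ord i; have ly := ltn_ord j.
  have D0 : i + m.+1 - j < 2 * m.+1 by lia.
  apply: leq_trans (leq_bigmax (Ordinal D0)).
  rewrite card_gt0; apply/set0Pn; exists (i, j); rewrite inE xS /=; apply/eqP; lia.
apply/eqP; rewrite -leqn0; apply/bigmax_leqP => D _.
rewrite leqn0 cards_eq0; apply/eqP/setP => -[i j]; rewrite inE memS in_set0.
have : ~~ [|| a == m.+1, b == m.+1, m.+1 - ha < b | m.+1 - hb.+1 < a] by rewrite hc.
rewrite !negb_or -!leqNgt => /and4P [c1 c2 c3 c4].
have a' : a < m.+1 by rewrite ltn_neqAle c1 an.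
have b' : b < m.+1 by rewrite ltn_neqAle c2 bn.
have li := ltn_ord i; have lj := ltn_ord j.
apply/negbTE/negP => /andP [/andP [h1 h2] _].
by case/orP: h1 => h1; case/orP: h2 => /andP [/eqP h2 h3]; lia.
Qed.

Lemma summand n lam a b (d : 'I_n) : is_young n lam -> a <= n -> b <= n ->
  Lf lam (n - d.+1) <= n - d.+1 ->
  maxdiag (corect n a b :\: hook_compl n (hook_a (rot_compl n lam) d)
                                         (hook_b (rot_compl n lam) d))
  = (rev_ord d \in Xs n lam b) || (rev_ord d \in Ys n lam a).
Proof.
move=> Y an bn dg.
have Lm := @Lmono _ _ Y.
have dn := ltn_ord d.
rewrite md_hook //; last by lia.
rewrite ha_val hb_val.
have -> : count (fun j => (d <= j) && (Lf lam (n - d.+1) <= n - j.+1)) (iota 0 n)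
        = count (fun j => d <= j < n - Lf lam (n - d.+1)) (iota 0 n).
  apply: eq_in_count => j; rewrite mem_iota add0n => /andP [_ jn] /=; congr andb; apply/idP/idP => h; lia.
rewrite count_int.
have Xeq : (n - (minn (n - Lf lam (n - d.+1)) n - d) < b) = (rev_ord d \in Xs n lam b).
  rewrite inE /=; apply/idP/andP => [h|[h1 h2]]; first (split; lia); lia.
have Yeq : (n - (count (fun i => (d < i < n) && (Lf lam (n - i.+1) <= n - d.+1))
                  (iota 0 n)).+1 < a) = (rev_ord d \in Ys n lam a).
  set hb := count _ _.
  have -> : (n - hb.+1 < a) = (0 < a) && (n - a <= hb).
    by apply/idP/idP => [h|/andP [h1 h2]]; [apply/andP; split|]; lia.
  rewrite /hb (@count_thr n d (fun i => Lf lam (n - i.+1) <= n - d.+1)) //; last first.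
    move=> i j h1 h2 h3 h4; apply: leq_trans h4; apply: Lm; lia.
  rewrite inE /=.
  case: (posnP a) => [a0|ap].
    rewrite a0 /=; apply/esym/negP => /andP [h _]; lia.
  rewrite /=.
  case: (ltnP (d + (n - a)) n) => h.
    have -> : n - (d + (n - a)).+1 = n - d.+1 - (n - a) by lia.
    case: (posnP (n - a)) => [p0|pp] /=.
      by rewrite p0 subn0 dg.
    by have -> : n - a <= n - d.+1 by lia.
  case: (posnP (n - a)) => [p0|pp] /=; first by lia.
  by apply/esym/negP => /andP [h1 _]; lia.
rewrite Xeq Yeq.
have Ya : a == n -> rev_ord d \in Ys n lam a.
  by move/eqP => ea; rewrite inE /= ea subnn subn0 dg.
have Xb : b == n -> rev_ord d \in Xs n lam b.
  by move/eqP => eb; rewrite inE /= eb subnn subn0 dg.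
case ea : (a == n); first by rewrite (Ya ea) orbT.
case eb : (b == n); first by rewrite (Xb eb).
by [].
Qed.

Lemma card_union_max n lam a b : is_young n lam ->
  #|Xs n lam b :|: Ys n lam a| = maxn #|Xs n lam b| #|Ys n lam a|.
Proof.
move=> Y; have Lm := @Lmono _ _ Y.
have upX : forall e e' : 'I_n, e <= e' -> e \in Xs n lam b -> e' \in Xs n lam b.
  move=> e e' h; rewrite !inE => /andP [h1 h2]; apply/andP; split; first by lia.
  have := ltn_ord e'; have := Lm e e' h; lia.
have upY : forall e e' : 'I_n, e <= e' -> e \in Ys n lam a -> e' \in Ys n lam a.
  move=> e e' h; rewrite !inE => /andP [h1 h2]; apply/andP; split; first by lia.
  have := ltn_ord e'; have := Lm (e - (n - a)) (e' - (n - a)); lia.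
case: (boolP (Xs n lam b \subset Ys n lam a)) => h.
  by rewrite (setUidPr h); apply/esym/maxn_idPr; apply: subset_leq_card.
have h' : Ys n lam a \subset Xs n lam b.
  move/subsetPn: h => [x xX xnY]; apply/subsetP => y yY.
  case: (leqP x y) => [xy|yx]; first exact: upX xX.
  by move: xnY; rewrite (upY _ _ (ltnW yx) yY).
by rewrite (setUidPl h'); apply/esym/maxn_idPl; apply: subset_leq_card.
Qed.

Theorem mainTheorem12 (n : nat) (lam : seq nat) :
  is_young n lam ->
  n_below (boxes n lam) <= n_above (boxes n lam) ->
  forall a b : nat, a <= n -> b <= n ->
  maxdiag (corect n a b :\: boxes n lam) =
  \sum_(h <- hook_decomp n lam) maxdiag (corect n a b :\: hook_compl n h.1 h.2).
Proof.
move=> Y _ a b an bn.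
have -> : maxdiag (corect n a b :\: boxes n lam) = maxn #|Xs n lam b| #|Ys n lam a|.
  by apply/eqP; rewrite eqn_leq LHS_ub // LHS_lb.
rewrite -card_union_max //.
rewrite /hook_decomp big_map big_filter big_enum_cond /=.
rewrite (eq_bigr (fun d : 'I_n => ((rev_ord d \in Xs n lam b) || (rev_ord d \in Ys n lam a)) : nat)); last first.
  by move=> d; rewrite memR => dg; rewrite summand.
rewrite (reindex_inj rev_ord_inj) /=.
rewrite (eq_bigr (fun e : 'I_n => if (e \in Xs n lam b) || (e \in Ys n lam a) then 1 else 0)); last first.
  by move=> e _; rewrite rev_ordK; case: (_ || _).
rewrite -big_mkcondr sum1dep_card.
apply: eq_card => e; rewrite in_setU [in RHS]in_set memR /=.
have Lm := @Lmono _ _ Y.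
have en := ltn_ord e.
have -> : n - (n - e.+1).+1 = e by lia.
case h: ((e \in Xs n lam b) || (e \in Ys n lam a)); last by rewrite andbF.
rewrite andbT; symmetry; move: h; rewrite !inE => /orP [] /andP [h1 h2]; first lia.
have := Lm (e - (n - a)) e; lia.
Qed.
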